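(* Let $X$ be a non-empty set, $R$ a binary relation on $X$, and $\tau$ a compact topology on $X$ such that $R$ is upper tc-semicontinuous with respect to $\tau$. Let $\mu(\Xi,\widetilde{R})=\{X^*_i : i\in I\}$ be the family of $\widetilde{R}$-maximal strong components of $(X,R)$. Then a set $W\subseteq X$ is a $w$-stable set of $(X,R)$ if and only if there exist $J\subseteq I$ and, for each $j\in J$, an element $x_j\in X^*_j$ such that $W=\{x_j : j\in J\}$ (i.e. $W$ is contained in the union of the $\widetilde{R}$-maximal components and contains at most one alternative from each of them).
   Context: For a binary relation $R$ on $X$, the transitive closure $\overline{R}$ is defined by: $x\overline{R}y$ iff there exist $K\ge 1$ and $x_0,\dots,x_K\in X$ with $x_0=x$, $x_K=y$, and $x_{k-1}Rx_k$ for all $k\in\{1,\dots,K\}$. A set $F\subseteq X$ is a $w$-stable set of $(X,R)$ if (i) (internal stability) for all distinct $x,y\in F$, $(x,y)\notin\overline{R}$; and (ii) (external stability) for all $x\in F$ and $y\in X\setminus F$, if $y\overline{R}x$ then $x\overline{R}y$. $R$ is upper tc-semicontinuous with respect to $\tau$ if for every $x\in X$ the set $\{y\in X: x\overline{R}y\}$ is open in $\tau$. A topology is compact if every open cover of $X$ has a finite subcover. Strong components: define the equivalence relation $x\sim y$ iff $x=y$ or ($x\overline{R}y$ and $y\overline{R}x$). The ground sets of the strong components of $(X,R)$ are the equivalence classes of $\sim$ (so an element lying on no cycle forms a singleton component); they partition $X$. Let $\Xi$ be the set of these classes. The contraction of $(X,R)$ is $(\Xi,\widetilde{R})$, where for $A,B\in\Xi$,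 $A\widetilde{R}B$ iff there exist $x\in A$, $y\in B$ with $xRy$. A class $A\in\Xi$ is $\widetilde{R}$-maximal if there is no $B\in\Xi$ with $B\ne A$ and $B\widetilde{R}A$. $\mu(\Xi,\widetilde{R})$ denotes the family of $\widetilde{R}$-maximal classes in $\Xi$. *)

(* Defs.v *)
From HB Require Import structures.
From mathcomp Require Import all_boot all_order.
From mathcomp Require Import all_classical topology.
Set Implicit Arguments. Unset Strict Implicit. Unset Printing Implicit Defensive.
Local Open Scope classical_set_scope.

Definition tc {T : Type} (R : T -> T -> Prop) (x y : T) : Prop :=
  exists (K : nat) (s : nat -> T),
    (1 <= K)%N /\ s 0%N = x /\ s K = y /\
    (forall k : nat, (1 <= k)%N -> (k <= K)%N -> R (s k.-1) (s k)).

Definition w_stable {T : Type} (R : T -> T -> Prop) (F : set T) : Prop :=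
  (forall x y, F x -> F y -> x <> y -> ~ tc R x y) /\
  (forall x y, F x -> ~ F y -> tc R y x -> tc R x y).

Definition upper_tc_semicontinuous {T : topologicalType} (R : T -> T -> Prop) : Prop :=
  forall x : T, open [set y | tc R x y].

Definition scomp_equiv {T : Type} (R : T -> T -> Prop) (x y : T) : Prop :=
  x = y \/ (tc R x y /\ tc R y x).

Definition strong_component {T : Type} (R : T -> T -> Prop) (A : set T) : Prop :=
  exists x : T, A = [set y | scomp_equiv R x y].

Definition contraction_rel {T : Type} (R : T -> T -> Prop) (A B : set T) : Prop :=
  exists x y, A x /\ B y /\ R x y.

Definition maximal_component {T : Type} (R : T -> T -> Prop) (A : set T) : Prop :=
  strong_component R A /\
  forall B, strong_component R B -> B <> A -> ~ contraction_rel R B A.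

(* Main.v *)
Require Import Defs.
From HB Require Import structures.
From mathcomp Require Import all_boot all_order.
From mathcomp Require Import all_classical topology.
From mathcomp Require Import zify.
Local Open Scope classical_set_scope.

Section Aux.
Set Implicit Arguments.
Variables (T : Type) (R : T -> T -> Prop).

Lemma tc_one x y : R x y -> tc R x y.
Proof.
move=> h; exists 1%N, (fun k => if k == 0%N then x else y); split=> //; split=> //; split=> //.
by move=> k h1 h2; have -> : k = 1%N by lia.
Qed.

Lemma tc_trans x y z : tc R x y -> tc R y z -> tc R x z.
Proof.
move=> [K1 [s1 [h11 [h12 [h13 h14]]]]] [K2 [s2 [h21 [h22 [h23 h24]]]]].
exists (K1 + K2)%N, (fun k => if (k <= K1)%N then s1 k else s2 (k - K1)%N).
split; first lia. split; first by rewrite leq0n. split.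
  rewrite ifF; first by have -> : (K1 + K2 - K1)%N = K2 by lia.
  by apply/negbTE; rewrite -ltnNge; lia.
move=> k hk1 hk2.
case: (leqP k K1) => hk.
  by rewrite ifT; [apply: h14 | lia].
case: (leqP k.-1 K1) => hk'.
  have e : k.-1 = K1 by lia.
  rewrite e h13 -h22.
  have e2 : (k - K1)%N = 1%N by lia.
  rewrite e2; exact: (h24 1%N).
have e : (k.-1 - K1)%N = (k - K1).-1 by lia.
rewrite e; apply: h24; lia.
Qed.

Lemma scomp_sym x y : scomp_equiv R x y -> scomp_equiv R y x.
Proof. by case=> [->|[a b]]; [left|right]. Qed.

Lemma scomp_trans x y z : scomp_equiv R x y -> scomp_equiv R y z -> scomp_equiv R x z.
Proof.
case=> [->//|[a b]]; case=> [<-|[c d]]; first by right.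
by right; split; apply: tc_trans; eauto.
Qed.

Lemma class_eq a b : scomp_equiv R a b ->
  [set y | scomp_equiv R a y] = [set y | scomp_equiv R b y].
Proof.
move=> h; apply/seteqP; split=> y /= hy.
  exact: scomp_trans (scomp_sym h) hy.
exact: scomp_trans h hy.
Qed.

Lemma comp_class A x : strong_component R A -> A x -> A = [set y | scomp_equiv R x y].
Proof. by move=> [a ->] /= h; apply: class_eq. Qed.

Lemma max_pred A y z : maximal_component R A -> A z -> R y z -> A y.
Proof.
move=> [hA hmax] hz hyz.
have hB : strong_component R [set w | scomp_equiv R y w] by exists y.
case: (pselect ([set w | scomp_equiv R y w] = A)) => e.
  by rewrite -e /=; left.
exfalso; apply: (hmax _ hB e); exists y, z; split=> //; by left.
Qed.

Lemma max_back A y z : maximal_component R A -> A z -> tc R y z -> A y.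
Proof.
move=> hA hz [K [s [h1 [h2 [h3 h4]]]]].
have key : forall n, (n <= K)%N -> A (s (K - n)%N).
  elim=> [_|n IH hn]; first by rewrite subn0 h3.
  have e : (K - n.+1)%N = (K - n).-1 by lia.
  rewrite e; apply: (max_pred hA (IH (ltnW hn))); apply: h4; lia.
by have := key K (leqnn K); rewrite subnn h2.
Qed.

End Aux.
Arguments tc_one {T R x y}.
Arguments tc_trans {T R x y z}.
Arguments max_back {T R A y z}.
Arguments comp_class {T R A x}.

Theorem theorem2 (T : topologicalType) (R : T -> T -> Prop)
  (hne : [set: T] !=set0)
  (hcpt : compact [set: T])
  (husc : upper_tc_semicontinuous R)
  (W : set T) :
  w_stable R W <->
  exists (J : set (set T)) (xj : set T -> T),
    J `<=` maximal_component R /\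
    (forall A, J A -> A (xj A)) /\
    W = xj @` J.
Proof.
split.
- move=> [hint hext].
  have hmaxW : forall x, W x -> maximal_component R [set y | scomp_equiv R x y].
    move=> x hx; split; first by exists x.
    move=> B hB hne' [b [a [hb [ha hba]]]].
    have tbx : tc R b x.
      case: ha => [->|[_ h]]; first exact: tc_one.
      exact: tc_trans (tc_one hba) h.
    have sbx : scomp_equiv R b x.
      case: (pselect (W b)) => hWb.
        case: (pselect (b = x)) => e; first by left.
        by exfalso; apply: (hint b x hWb hx e tbx).
      by right; split=> //; apply: hext.
    apply: hne'; rewrite (comp_class hB hb); exact: class_eq.
  pose d := projT1 (cid hne).
  pose xj := fun A : set T =>
    match pselect (exists x, W x /\ A x) with
    | left h => projT1 (cid h)
    | right _ => d end.
  have xjP : forall A, (exists x, W x /\ A x) -> W (xj A) /\ A (xj A).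
    move=> A h; rewrite /xj; case: pselect => // h'.
    exact: (projT2 (cid h')).
  pose J := [set A | exists x, W x /\ A = [set y | scomp_equiv R x y]].
  exists J, xj; split; [|split].
  + by move=> A [x [hx ->]]; apply: hmaxW.
  + move=> A [x [hx ->]]; apply: (xjP _ _).2; exists x; split=> //; by left.
  + apply/seteqP; split=> x /=.
      move=> hx; exists [set y | scomp_equiv R x y]; first by exists x.
      have [h1 h2] := xjP [set y | scomp_equiv R x y] (ex_intro _ x (conj hx (or_introl erefl))).
      case: h2 => [//|[t1 t2]].
      case: (pselect (x = xj [set y | scomp_equiv R x y])) => e; first by [].
      by exfalso; apply: (hint _ _ hx h1 e t1).
    move=> [A [y [hy ->]] <-].
    apply: (xjP _ _).1; exists y; split=> //; by left.
- move=> [J [xj [hJ [hxj ->]]]]; split.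
  + move=> x y [A hA <-] [B hB <-] ne t.
    have hBx := max_back (hJ B hB) (hxj B hB) t.
    apply: ne; congr xj.
    rewrite (comp_class (hJ A hA).1 (hxj A hA)).
    by rewrite (comp_class (hJ B hB).1 hBx).
  + move=> x y [A hA <-] hy t.
    have hAy := max_back (hJ A hA) (hxj A hA) t.
    have hs : scomp_equiv R (xj A) y.
      move: (comp_class (hJ A hA).1 (hxj A hA)) hAy.
      by move: (xj A) => z ->.
    case: hs => [e|[h1 h2]]; last exact: h1.
    by exfalso; apply: hy; rewrite -e; exists A.
Qed.
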